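(* Let $\sim$ denote either $\cong$ or $\simeq$. For a type expression $A$ the following are equivalent: (a) $A\in\mathbf{TF}$; (b) $A$ is tail finite; (c) $A\not\sim\top$; (d) $A$ is not a $\top$-variant.
   Context: Type expressions: fix a countably infinite set of type variables $X,Y,Z,\dots$. Pseudo type expressions are generated by $A::=X\mid A\to A\mid \bullet A\mid \mu X.A$ ($\mu$ binds $X$; $\alpha$-convertible expressions are identified; $\to$ associates to the right; $\bullet$ binds tighter than $\to$, which binds tighter than $\mu$). $A[B/X]$ denotes capture-avoiding substitution. $\top$ abbreviates $\mu X.\bullet X$, and $\bullet^n A$ denotes $A$ prefixed by $n$ copies of $\bullet$. The tail $t(A)$ is defined by $t(X)=X$, $t(A\to B)=t(B)$, $t(\bullet A)=\bullet t(A)$, $t(\mu X.A)=\mu X.t(A)$; it always has the form $\bullet^{m_0}\mu X_1.\bullet^{m_1}\mu X_2.\cdots\mu X_n.\bullet^{m_n}Y$. $A$ is a $\top$-variant iff $Y=X_i$ for some $1\le i\le n$ with $X_i\notin\{X_{i+1},\dots,X_n\}$ and $m_i+\dots+m_n\ge 1$. $A$ is proper in $X$ iff: a variable $Y$ is proper in $X$ iff $Y\neq X$; $\bullet A$ is always proper in $X$; $A\to B$ is proper in $X$ iff both $A,B$ are proper in $X$ or $B$ is a $\top$-variant; for $Y\ne X$, $\mu Y.A$ is proper in $X$ iff $A$ is proper in $X$ or $\mu Y.A$ is a $\top$-variant. Type expressions are the least set of pseudo type expressions containing all type variables, closed under $\to$ and $\bullet$, and containing $\mu X.A$ whenever it contains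 $A$ and $A$ is proper in $X$. Equality: $\cong$ is the least relation on type expressions such that: $A\cong A$; $A\cong B$ implies $B\cong A$; $A\cong B$ and $B\cong C$ imply $A\cong C$; $A\cong B$ implies $\bullet A\cong\bullet B$; $A\cong C$ and $B\cong D$ imply $A\to B\cong C\to D$; $A\to\top\cong\top$; $\mu X.A\cong A[\mu X.A/X]$; and if $A\cong C[A/X]$ with $C$ proper in $X$, then $A\cong\mu X.C$. $\simeq$ is the least relation satisfying the same closure conditions and additionally $\bullet(A\to B)\simeq\bullet A\to\bullet B$. Tail finiteness: $A$ is tail finite iff $A\cong\bullet^{m_0}(B_1\to\bullet^{m_1}(B_2\to\cdots\to\bullet^{m_{n-1}}(B_n\to\bullet^{m_n}X)\cdots))$ for some $n,m_0,\dots,m_n\ge0$, type expressions $B_1,\dots,B_n$ and type variable $X$. For a set $V$ of type variables, $\mathbf{TF}^V$ is the least set of type expressions such that: $X\in\mathbf{TF}^V$ for every type variable $X\notin V$; $\bullet A\in\mathbf{TF}^V$ if $A\in\mathbf{TF}^V$; $A\to B\in\mathbf{TF}^V$ for every type expression $A$ if $B\in\mathbf{TF}^V$; $\mu X.A\in\mathbf{TF}^V$ if $\mu X.A$ is a type expression and $A\in\mathbf{TF}^{V\cup\{X\}}$. $\mathbf{TF}=\mathbf{TF}^{\emptyset}$. *)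

(* Defs.v *)
(* Type expressions in de Bruijn representation
   (alpha-convertible expressions are identified, as in the paper). *)
From Stdlib Require Import List Arith.
Import ListNotations.

Inductive ty : Type :=
| TVar (n : nat)
| TArr (A B : ty)
| TLater (A : ty)
| TMu (A : ty).           (* mu binds de Bruijn index 0 in A *)

Fixpoint lift (c : nat) (A : ty) : ty :=
  match A with
  | TVar n => if c <=? n then TVar (S n) else TVar n
  | TArr A1 A2 => TArr (lift c A1) (lift c A2)
  | TLater A1 => TLater (lift c A1)
  | TMu A1 => TMu (lift (S c) A1)
  end.

(* capture-avoiding substitution of B for variable k in A
   (variables above k are decremented, since the binder of k disappears) *)
Fixpoint subst (k : nat) (B : ty) (A : ty) : ty :=
  match A with
  | TVar n => if n =? k then B else if k <? n then TVar (pred n) else TVar n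
  | TArr A1 A2 => TArr (subst k B A1) (subst k B A2)
  | TLater A1 => TLater (subst k B A1)
  | TMu A1 => TMu (subst (S k) (lift 0 B) A1)
  end.

(* A[B/X] where X is the variable bound by the enclosing mu (index 0) *)
Definition subst0 (B A : ty) : ty := subst 0 B A.

Definition top : ty := TMu (TLater (TVar 0)).

Fixpoint bullets (n : nat) (A : ty) : ty :=
  match n with 0 => A | S n' => TLater (bullets n' A) end.

Fixpoint tail (A : ty) : ty :=
  match A with
  | TVar n => TVar n
  | TArr _ B => tail B
  | TLater A1 => TLater (tail A1)
  | TMu A1 => TMu (tail A1)
  end.

(* On a tail  bullet^{m0} mu X1. bullet^{m1} ... mu Xn. bullet^{mn} Y :
   ctx records, for each enclosing mu (innermost first), whether at least
   one bullet occurs between that mu and the current position.  The final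
   variable Y = X_i (bound by the i-th mu) with m_i+...+m_n >= 1 iff the
   entry of ctx for its binder is true. *)
Fixpoint tv_aux (A : ty) (ctx : list bool) : bool :=
  match A with
  | TVar n => nth n ctx false
  | TArr _ _ => false   (* does not occur in tails *)
  | TLater A1 => tv_aux A1 (map (fun _ => true) ctx)
  | TMu A1 => tv_aux A1 (false :: ctx)
  end.

Definition top_variant (A : ty) : bool := tv_aux (tail A) [].

Fixpoint proper (x : nat) (A : ty) : bool :=
  match A with
  | TVar n => negb (n =? x)
  | TLater _ => true
  | TArr A1 B => (proper x A1 && proper x B) || top_variant B
  | TMu A1 => proper (S x) A1 || top_variant (TMu A1)
  end.

Inductive wf : ty -> Prop :=
| wf_var n : wf (TVar n)
| wf_arr A B : wf A -> wf B -> wf (TArr A B)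
| wf_later A : wf A -> wf (TLater A)
| wf_mu A : wf A -> proper 0 A = true -> wf (TMu A).

(* eqty false is the relation ≅ ; eqty true is ≃ (with the extra
   distributivity axiom bullet(A->B) ≃ bullet A -> bullet B). *)
Inductive eqty (dist : bool) : ty -> ty -> Prop :=
| eq_refl A : wf A -> eqty dist A A
| eq_sym A B : eqty dist A B -> eqty dist B A
| eq_trans A B C : eqty dist A B -> eqty dist B C -> eqty dist A C
| eq_later A B : eqty dist A B -> eqty dist (TLater A) (TLater B)
| eq_arr A B C D : eqty dist A C -> eqty dist B D ->
    eqty dist (TArr A B) (TArr C D)
| eq_arr_top A : wf A -> eqty dist (TArr A top) top
| eq_unfold A : wf (TMu A) -> eqty dist (TMu A) (subst0 (TMu A) A)
| eq_contract A C : wf A -> wf C -> proper 0 C = true ->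
    eqty dist A (subst0 A C) -> eqty dist A (TMu C)
| eq_dist A B : dist = true -> wf A -> wf B ->
    eqty dist (TLater (TArr A B)) (TArr (TLater A) (TLater B)).

Definition cong := eqty false.
Definition simeq := eqty true.

(* bullet^{m0}(B1 -> bullet^{m1}(B2 -> ... -> bullet^{m_{n-1}}(Bn -> bullet^{mn} X)...))
   encoded by l = [(m0,B1); ...; (m_{n-1},Bn)], final count mn and variable X *)
Fixpoint tf_form (l : list (nat * ty)) (mn : nat) (x : nat) : ty :=
  match l with
  | [] => bullets mn (TVar x)
  | (m, B) :: l' => bullets m (TArr B (tf_form l' mn x))
  end.

Definition tail_finite (A : ty) : Prop :=
  exists (l : list (nat * ty)) (mn x : nat),
    Forall (fun p => wf (snd p)) l /\ cong A (tf_form l mn x).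

(* TF^V, with V a set of variables (de Bruijn indices relative to the
   current position); entering a mu shifts V and adds the bound index 0. *)
Inductive TFV : (nat -> Prop) -> ty -> Prop :=
| tf_var (V : nat -> Prop) n : ~ V n -> TFV V (TVar n)
| tf_later (V : nat -> Prop) A : TFV V A -> TFV V (TLater A)
| tf_arr (V : nat -> Prop) A B : wf A -> TFV V B -> TFV V (TArr A B)
| tf_mu (V : nat -> Prop) A : wf (TMu A) ->
    TFV (fun n => match n with 0 => True | S k => V k end) A -> TFV V (TMu A).

Definition TF (A : ty) : Prop := TFV (fun _ => False) A.

(* Main.v *)
From Stdlib Require Import List Arith Lia Bool FunctionalExtensionality.
Import ListNotations.
Require Import Defs.

Ltac bd :=
  repeat match goal with
  | |- context [Nat.ltb ?a ?b] => destruct (Nat.ltb_spec a b)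
  | |- context [Nat.leb ?a ?b] => destruct (Nat.leb_spec a b)
  | |- context [Nat.eqb ?a ?b] => destruct (Nat.eqb_spec a b)
  end.

Inductive val := Fin (k n : nat) | Inf.
Definition bump v := match v with Fin k n => Fin (S k) n | Inf => Inf end.
Fixpoint bumpn m v := match m with 0 => v | S m => bump (bumpn m v) end.
Definition scons (v : val) (r : nat -> val) n := match n with 0 => v | S m => r m end.
Fixpoint Vl (A : ty) (r : nat -> val) : val :=
  match A with
  | TVar n => r n
  | TArr _ B => Vl B r
  | TLater A1 => bump (Vl A1 r)
  | TMu A1 => Vl A1 (scons Inf r)
  end.
Definition ins k v (r : nat -> val) n :=
  if n <? k then r n else if n =? k then v else r (pred n).
Definition del c (r : nat -> val) n := if c <=? n then r (S n) else r n.

Lemma bumpn_Inf : forall m, bumpn m Inf = Inf.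
Proof. induction m; simpl; auto. rewrite IHm; auto. Qed.
Lemma bumpn_Fin : forall m k n, bumpn m (Fin k n) = Fin (m + k) n.
Proof. induction m; simpl; intros; auto. rewrite IHm; auto. Qed.
Lemma bumpn_fix : forall m x, bumpn (S m) x = x -> x = Inf.
Proof. intros m [k n|] H; auto. rewrite bumpn_Fin in H. injection H; lia. Qed.
Lemma bumpn_ninf : forall m v, v <> Inf -> bumpn m v <> Inf.
Proof. intros m [k n|] H; [rewrite bumpn_Fin; discriminate|contradiction]. Qed.

Lemma ins_S : forall k v w r, ins (S k) v (scons w r) = scons w (ins k v r).
Proof.
  intros. apply functional_extensionality. intros [|m]; unfold ins, scons; bd; try lia; auto.
  destruct m; [lia|]. simpl. auto.
Qed.
Lemma scons_ins : forall v r, scons v r = ins 0 v r.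
Proof.
  intros. apply functional_extensionality. intros [|m]; unfold ins, scons; bd; try lia; auto.
Qed.
Lemma del0_scons : forall w r, del 0 (scons w r) = r.
Proof. intros. apply functional_extensionality. intros n. reflexivity. Qed.

Lemma Vl_tail : forall A r, Vl (tail A) r = Vl A r.
Proof. induction A; simpl; intros; auto. rewrite IHA; auto. Qed.

Lemma Vl_bullets : forall m A r, Vl (bullets m A) r = bumpn m (Vl A r).
Proof. induction m; simpl; intros; auto. rewrite IHm; auto. Qed.

Lemma nth_map_true : forall (l : list bool) n,
  nth n (map (fun _ => true) l) false = (n <? length l).
Proof.
  induction l; intros [|n]; simpl; auto.
Qed.

Lemma nth_true_lt : forall (ctx : list bool) n, nth n ctx false = true -> n < length ctx.
Proof.
  intros. destruct (lt_dec n (length ctx)); auto.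
  rewrite nth_overflow in H by lia. discriminate.
Qed.

Lemma tv_Inf : forall T ctx r, tv_aux T ctx = true ->
  (forall n, n < length ctx -> r n = Inf) -> Vl T r = Inf.
Proof.
  induction T; simpl; intros ctx r H H0.
  - apply H0. apply nth_true_lt; auto.
  - discriminate.
  - rewrite (IHT _ r H); auto. intros. apply H0. rewrite length_map in H1. auto.
  - apply (IHT _ _ H). intros [|n] Hn; simpl in *; auto. apply H0; lia.
Qed.

Lemma tv_Inf' : forall A r, top_variant A = true -> Vl A r = Inf.
Proof.
  intros. rewrite <- Vl_tail. apply (tv_Inf _ [] r H). simpl; intros; lia.
Qed.

Lemma Vl_lift : forall B c r, Vl (lift c B) r = Vl B (del c r).
Proof.
  induction B; simpl; intros.
  - unfold del. destruct (c <=? n); reflexivity.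
  - auto.
  - rewrite IHB; auto.
  - rewrite IHB. f_equal. apply functional_extensionality. intros [|m]; unfold del, scons; bd; try lia; auto.
Qed.

Lemma Vl_subst : forall A k B r, Vl (subst k B A) r = Vl A (ins k (Vl B r) r).
Proof.
  induction A; simpl; intros.
  - unfold ins. bd; try lia; subst; simpl; auto.
  - auto.
  - rewrite IHA; auto.
  - rewrite IHA, Vl_lift, del0_scons, ins_S. reflexivity.
Qed.

Lemma dep : forall A k r, (exists m, forall v, Vl A (ins k v r) = bumpn m v) \/
  (forall v w, Vl A (ins k v r) = Vl A (ins k w r)).
Proof.
  induction A; simpl; intros.
  - unfold ins. bd; try (right; reflexivity). left; exists 0; auto.
  - auto.
  - destruct (IHA k r) as [[m Hm]|Hc].
    + left; exists (S m); intros; rewrite Hm; auto.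
    + right; intros; rewrite (Hc v w); auto.
  - destruct (IHA (S k) (scons Inf r)) as [[m Hm]|Hc].
    + left; exists m; intros; rewrite <- ins_S; auto.
    + right; intros; rewrite <- !ins_S; auto.
Qed.

Lemma prop_dep : forall C k r, proper k C = true ->
  (forall v w, Vl C (ins k v r) = Vl C (ins k w r)) \/
  (exists m, forall v, Vl C (ins k v r) = bumpn (S m) v).
Proof.
  induction C; simpl; intros k r Hp.
  - left. intros. unfold ins. bd; try lia; auto; subst; rewrite Nat.eqb_refl in Hp; discriminate.
  - apply orb_true_iff in Hp. destruct Hp as [Hp|Hp].
    + apply andb_true_iff in Hp. apply IHC2. tauto.
    + left. intros. rewrite !tv_Inf'; auto.
  - destruct (dep C k r) as [[m Hm]|Hc].
    + right; exists m; intros; rewrite Hm; auto.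
    + left; intros; rewrite (Hc v w); auto.
  - apply orb_true_iff in Hp. destruct Hp as [Hp|Hp].
    + destruct (IHC (S k) (scons Inf r) Hp) as [Hc|[m Hm]].
      * left; intros; rewrite <- !ins_S; auto.
      * right; exists m; intros; rewrite <- ins_S; auto.
    + left. intros. 
      pose proof (tv_Inf' (TMu C) (ins k v r) Hp). pose proof (tv_Inf' (TMu C) (ins k w r) Hp).
      simpl in *. congruence.
Qed.

Lemma inv : forall d A B, eqty d A B -> forall r, Vl A r = Vl B r.
Proof.
  induction 1 as [A Hw | A B H IH | A B C H1 IH1 H2 IH2 | A B H IH | A B C D H1 IH1 H2 IH2
    | A Hw | A Hw | A C HwA HwC Hp H IH | A B Hd HwA HwB]; intros r; simpl; auto.
  - rewrite IH1; auto.
  - rewrite IH; auto.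
  - unfold subst0. rewrite Vl_subst. simpl. rewrite scons_ins.
    destruct (dep A 0 r) as [[m Hm]|Hc].
    + rewrite (Hm Inf), bumpn_Inf, Hm, bumpn_Inf. auto.
    + apply Hc.
  - specialize (IH r). unfold subst0 in IH. rewrite Vl_subst in IH. rewrite scons_ins.
    destruct (prop_dep C 0 r Hp) as [Hc|[m Hm]].
    + rewrite IH. apply Hc.
    + rewrite Hm in IH. symmetry in IH. apply bumpn_fix in IH. rewrite IH, Hm, bumpn_Inf. auto.
Qed.

Fixpoint ts (c L : nat) (A : ty) : ty :=
  match A with
  | TVar n => if n <? c then TVar n else if n <? c + L then top else TVar (n - L)
  | TArr A1 A2 => TArr (ts c L A1) (ts c L A2)
  | TLater A1 => TLater (ts c L A1)
  | TMu A1 => TMu (ts (S c) L A1)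
  end.

Lemma wf_top : wf top.
Proof. apply wf_mu. apply wf_later, wf_var. reflexivity. Qed.

Lemma ts_0 : forall A c, ts c 0 A = A.
Proof.
  induction A; simpl; intros; try congruence.
  bd; try lia; auto. f_equal; lia.
Qed.

Lemma ts_tail : forall A c L, tail (ts c L A) = ts c L (tail A).
Proof.
  induction A; simpl; intros; try congruence.
  destruct (n <? c); [|destruct (n <? c + L)]; reflexivity.
Qed.

Lemma tv_ts : forall T ctx c L, length ctx <= c -> tv_aux T ctx = true -> tv_aux (ts c L T) ctx = true.
Proof.
  induction T; simpl; intros ctx c L Hl H.
  - apply nth_true_lt in H as H'. bd; try lia. simpl. auto.
  - discriminate.
  - apply IHT; auto. rewrite length_map; auto.
  - apply IHT; simpl; auto. lia.
Qed.

Lemma top_variant_ts : forall A c L, top_variant A = true -> top_variant (ts c L A) = true.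
Proof.
  unfold top_variant. intros. rewrite ts_tail. apply tv_ts; simpl; auto. lia.
Qed.

Lemma proper_ts : forall A x c L, x < c -> proper x A = true -> proper x (ts c L A) = true.
Proof.
  induction A; intros x c L Hx H.
  - simpl. simpl in H. bd; try lia; simpl; auto. apply negb_true_iff, Nat.eqb_neq. lia.
  - simpl in *. apply orb_true_iff in H. destruct H as [H|H].
    + apply andb_true_iff in H. rewrite IHA1, IHA2; tauto.
    + rewrite top_variant_ts; auto. apply orb_true_r.
  - reflexivity.
  - change (proper (S x) (ts (S c) L A) || top_variant (ts c L (TMu A)) = true).
    simpl in H. apply orb_true_iff in H. destruct H as [H|H].
    + rewrite IHA; auto. lia.
    + rewrite top_variant_ts; auto. apply orb_true_r.
Qed.

Lemma wf_ts : forall A, wf A -> forall c L, wf (ts c L A).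
Proof.
  induction 1; intros c L; simpl.
  - destruct (n <? c); [constructor|destruct (n <? c + L)]; [apply wf_top | constructor].
  - constructor; auto.
  - constructor; auto.
  - constructor; auto. apply proper_ts; auto. lia.
Qed.

Lemma ts_subst : forall A c L, ts c (S L) A = subst c top (ts (S c) L A).
Proof.
  induction A; intros c L.
  - simpl. repeat (bd; simpl); try lia; try reflexivity; f_equal; lia.
  - simpl. rewrite IHA1, IHA2; auto.
  - simpl. rewrite IHA; auto.
  - simpl. rewrite IHA. reflexivity.
Qed.

Lemma tv_top : forall d A, wf A -> forall ctx, tv_aux (tail A) ctx = true ->
  eqty d (ts 0 (length ctx) A) top.
Proof.
  intros d A HA. induction HA; intros ctx Ht.
  - simpl in Ht. apply nth_true_lt in Ht. simpl. bd; try lia. apply eq_refl, wf_top.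
  - simpl in *. apply eq_trans with (TArr (ts 0 (length ctx) A) top).
    + apply eq_arr; auto. apply eq_refl, wf_ts; auto.
    + apply eq_arr_top, wf_ts; auto.
  - simpl in *. specialize (IHHA _ Ht). rewrite length_map in IHHA.
    apply eq_trans with (TLater top).
    + apply eq_later; auto.
    + apply eq_sym. exact (eq_unfold d (TLater (TVar 0)) wf_top).
  - simpl in *. specialize (IHHA _ Ht). simpl in IHHA. rewrite ts_subst in IHHA.
    apply eq_sym. apply eq_contract.
    + apply wf_top.
    + apply wf_ts; auto.
    + apply proper_ts; auto.
    + apply eq_sym. exact IHHA.
Qed.

Lemma tv_eq_top : forall d A, wf A -> top_variant A = true -> eqty d A top.
Proof.
  intros. pose proof (tv_top d A H [] H0). simpl in H1. rewrite ts_0 in H1. auto.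
Qed.

Lemma tv_aux_mono : forall T c1 c2, length c1 <= length c2 ->
  (forall n, nth n c1 false = true -> nth n c2 false = true) ->
  tv_aux T c1 = true -> tv_aux T c2 = true.
Proof.
  induction T; simpl; intros c1 c2 Hl Hn H; auto.
  - apply IHT with (map (fun _ => true) c1); auto.
    + rewrite !length_map; auto.
    + intros n. rewrite !nth_map_true. intros. apply Nat.ltb_lt. apply Nat.ltb_lt in H0. lia.
  - apply IHT with (false :: c1); simpl; auto. lia.
    intros [|n]; simpl; auto.
Qed.

Lemma tv_nil_mono : forall T ctx, tv_aux T [] = true -> tv_aux T ctx = true.
Proof.
  intros. apply tv_aux_mono with []; simpl; auto. lia. intros [|n]; simpl; discriminate.
Qed.

Lemma tv_false_TF : forall A, wf A -> forall ctx (V : nat -> Prop),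
  (forall n, V n <-> n < length ctx) ->
  (forall n, n < length ctx -> nth n ctx false = false -> proper n A = true) ->
  tv_aux (tail A) ctx = false -> TFV V A.
Proof.
  induction 1 as [m | A B HA IHA HB IHB | A HA IHA | A HA IHA Hp]; intros ctx V HV Hpr Htv.
  - simpl in Htv. apply tf_var. intro Vm. apply HV in Vm.
    specialize (Hpr m Vm Htv). simpl in Hpr. rewrite Nat.eqb_refl in Hpr. discriminate.
  - apply tf_arr; auto. simpl in Htv. apply (IHB ctx); auto.
    intros n Hn Hnth. specialize (Hpr n Hn Hnth). simpl in Hpr.
    apply orb_true_iff in Hpr. destruct Hpr as [H1|H1].
    + apply andb_true_iff in H1; tauto.
    + exfalso. unfold top_variant in H1. apply (tv_nil_mono _ ctx) in H1. congruence.
  - apply tf_later. simpl in Htv. apply (IHA (map (fun _ => true) ctx)); auto.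
    + intros n. rewrite length_map. auto.
    + intros n Hn Hnth. rewrite nth_map_true in Hnth. rewrite length_map in Hn.
      apply Nat.ltb_lt in Hn. congruence.
  - apply tf_mu. constructor; auto. apply (IHA (false :: ctx)).
    + intros [|n]; simpl. split; auto; lia. rewrite HV. lia.
    + intros [|n] Hn Hnth; auto. simpl in Hn, Hnth.
      specialize (Hpr n ltac:(lia) Hnth).
      change (proper (S n) A || top_variant (TMu A) = true) in Hpr.
      apply orb_true_iff in Hpr. destruct Hpr as [H1|H1]; auto.
      exfalso. unfold top_variant in H1. apply (tv_nil_mono _ ctx) in H1. congruence.
    + simpl in Htv. auto.
Qed.

Lemma tv_false_TF' : forall A, wf A -> top_variant A = false -> TF A.
Proof.
  intros. apply (tv_false_TF A H [] (fun _ => False)); simpl; auto.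
  - intros; split; intros; [contradiction | lia].
  - intros; lia.
Qed.

Fixpoint nf (x : nat) (A : ty) : bool :=
  match A with
  | TVar n => negb (n =? x)
  | TArr A B => nf x A && nf x B
  | TLater A => nf x A
  | TMu A => nf (S x) A
  end.

Lemma proper_var : forall n x, n <> x -> proper x (TVar n) = true.
Proof. intros. simpl. apply negb_true_iff, Nat.eqb_neq. auto. Qed.
Lemma nf_var : forall n x, n <> x -> nf x (TVar n) = true.
Proof. intros. simpl. apply negb_true_iff, Nat.eqb_neq. auto. Qed.

Definition bmp c x := if c <=? x then S x else x.

Lemma tv_lift : forall A ctx c, length ctx <= c -> tv_aux (tail A) ctx = true ->
  tv_aux (tail (lift c A)) ctx = true.
Proof.
  induction A; simpl; intros ctx c Hl H; auto.
  - apply nth_true_lt in H as H'. bd; try lia. auto.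
  - apply IHA; auto. rewrite length_map; auto.
  - apply IHA; simpl; auto. lia.
Qed.

Lemma proper_lift : forall A x c, proper x A = true -> proper (bmp c x) (lift c A) = true.
Proof.
  induction A; intros x c H.
  - simpl in *. unfold bmp. apply negb_true_iff in H. apply Nat.eqb_neq in H.
    bd; cbn beta iota; first [apply proper_var | apply nf_var]; lia.
  - simpl in *. apply orb_true_iff in H. destruct H as [H|H].
    + apply andb_true_iff in H. rewrite IHA1, IHA2; tauto.
    + unfold top_variant in *. rewrite tv_lift; [apply orb_true_r|..]; simpl; auto with arith.
  - reflexivity.
  - change (proper (S (bmp c x)) (lift (S c) A) || top_variant (lift c (TMu A)) = true).
    simpl in H. apply orb_true_iff in H. destruct H as [H|H].
    + replace (S (bmp c x)) with (bmp (S c) (S x)) by (unfold bmp; simpl; destruct (c <=? x); reflexivity); rewrite (IHA (S x) (S c) H). reflexivity.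
    + unfold top_variant in *. rewrite tv_lift; [apply orb_true_r|..]; simpl; auto with arith.
Qed.

Lemma wf_lift : forall A, wf A -> forall c, wf (lift c A).
Proof.
  induction 1; intros c; simpl.
  - destruct (c <=? n); constructor.
  - constructor; auto.
  - constructor; auto.
  - constructor; auto. apply (proper_lift A 0 (S c)); auto.
Qed.

Lemma proper_nf : forall A x, nf x A = true -> proper x A = true.
Proof.
  induction A; simpl; intros; auto.
  - apply andb_true_iff in H. rewrite IHA1, IHA2; tauto.
  - rewrite IHA; auto.
Qed.

Lemma nf_lift : forall B x c, nf x B = true -> nf (bmp c x) (lift c B) = true.
Proof.
  induction B; simpl; intros x c H.
  - unfold bmp. apply negb_true_iff in H. apply Nat.eqb_neq in H.
    bd; cbn beta iota; first [apply proper_var | apply nf_var]; lia.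
  - apply andb_true_iff in H. rewrite IHB1, IHB2; tauto.
  - auto.
  - replace (S (bmp c x)) with (bmp (S c) (S x)) by (unfold bmp; simpl; destruct (c <=? x); reflexivity); apply (IHB (S x) (S c) H).
Qed.

Lemma nf_lift_self : forall B c, nf c (lift c B) = true.
Proof.
  induction B; simpl; intros c.
  - bd; cbn beta iota; first [apply proper_var | apply nf_var]; lia.
  - rewrite IHB1, IHB2; auto.
  - auto.
  - auto.
Qed.

Lemma tv_subst : forall A ctx k B, length ctx <= k -> tv_aux (tail A) ctx = true ->
  tv_aux (tail (subst k B A)) ctx = true.
Proof.
  induction A; simpl; intros ctx k B Hl H; auto.
  - apply nth_true_lt in H as H'. bd; try lia. auto.
  - apply IHA; auto. rewrite length_map; auto.
  - apply IHA; simpl; auto. lia.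
Qed.

Lemma proper_subst : forall A x k B, x < k -> nf x B = true -> proper x A = true ->
  proper x (subst k B A) = true.
Proof.
  induction A; intros x k B Hx Hn H.
  - simpl in *. apply negb_true_iff in H. apply Nat.eqb_neq in H.
    bd; try lia; try (apply proper_nf; auto); cbn beta iota; first [apply proper_var | apply nf_var]; lia.
  - simpl in *. apply orb_true_iff in H. destruct H as [H|H].
    + apply andb_true_iff in H. rewrite IHA1, IHA2; tauto.
    + unfold top_variant in *. rewrite tv_subst; auto. apply orb_true_r. simpl; lia.
  - reflexivity.
  - change (proper (S x) (subst (S k) (lift 0 B) A) || top_variant (subst k B (TMu A)) = true).
    simpl in H. apply orb_true_iff in H. destruct H as [H|H].
    + rewrite IHA; auto. lia. apply (nf_lift B x 0 Hn).
    + unfold top_variant in *. rewrite tv_subst; auto. apply orb_true_r. simpl; lia.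
Qed.

Lemma wf_subst : forall A, wf A -> forall k B, wf B -> wf (subst k B A).
Proof.
  induction 1; intros k B0 HB; simpl.
  - destruct (n =? k); auto. destruct (k <? n); constructor.
  - constructor; auto.
  - constructor; auto.
  - constructor. apply IHwf. apply wf_lift; exact HB.
    apply proper_subst; auto. lia. apply nf_lift_self.
Qed.

Lemma TFV_ext : forall V A, TFV V A -> forall V', (forall n, V n <-> V' n) -> TFV V' A.
Proof.
  induction 1; intros V' HV.
  - apply tf_var. rewrite <- HV. auto.
  - apply tf_later; auto.
  - apply tf_arr; auto.
  - apply tf_mu; auto. apply IHTFV. intros [|n]; [tauto|apply HV].
Qed.

Lemma TFV_subst : forall W A, TFV W A -> forall k B, W k -> wf B ->
  TFV (fun n => if n <? k then W n else W (S n)) (subst k B A).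
Proof.
  induction 1 as [V n HV | V A H IH | V A B1 HA H IH | V A Hw H IH]; intros k B Hk HB.
  - simpl. assert (n <> k) by (intro; subst; contradiction).
    bd; try lia; apply tf_var; bd; try lia; auto.
    destruct n; [lia|]. simpl. auto.
  - simpl. apply tf_later; auto.
  - simpl. apply tf_arr; auto. apply wf_subst; auto.
  - simpl. apply tf_mu.
    + exact (wf_subst _ Hw k B HB).
    + eapply TFV_ext. apply (IH (S k) (lift 0 B)); auto. apply wf_lift; auto.
      intros [|n]; simpl; [tauto|]. bd; try lia; tauto.
Qed.

Fixpoint sp A := match A with TVar _ => 0 | TArr _ B => S (sp B) | TLater A => S (sp A) | TMu A => S (sp A) end.

Lemma sp_subst : forall W A, TFV W A -> forall k B, W k -> sp (subst k B A) = sp A.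
Proof.
  induction 1; intros k B0 Hk; simpl; auto.
  - assert (n <> k) by (intro; subst; contradiction). bd; try lia; auto.
Qed.

Lemma TF_tf : forall n A V, sp A <= n -> TFV V A ->
  exists l mn x, Forall (fun p => wf (snd p)) l /\ cong A (tf_form l mn x).
Proof.
  induction n as [|n IH]; intros A V Hsp HT; destruct HT as [V x HV | V A HT | V A B HA HT | V A Hw HT];
    simpl in Hsp; try lia.
  - exists [], 0, x. split; [constructor | apply eq_refl; constructor].
  - exists [], 0, x. split; [constructor | apply eq_refl; constructor].
  - destruct (IH A V ltac:(lia) HT) as [l [mn [x [Hf Hc]]]].
    destruct l as [|[m B] l].
    + exists [], (S mn), x. split; auto. exact (eq_later _ _ _ Hc).
    + exists ((S m, B) :: l), mn, x. split; [inversion Hf; constructor; auto|]. exact (eq_later _ _ _ Hc).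
  - destruct (IH B V ltac:(lia) HT) as [l [mn [x [Hf Hc]]]].
    exists ((0, A) :: l), mn, x. split; auto.
    exact (eq_arr _ _ _ _ _ (eq_refl _ _ HA) Hc).
  - assert (HT2 : TFV V (subst0 (TMu A) A)).
    { eapply TFV_ext. apply (TFV_subst _ _ HT 0 (TMu A)); simpl; auto.
      intros m; simpl. tauto. }
    assert (Hs : sp (subst0 (TMu A) A) = sp A) by (apply (sp_subst _ _ HT); simpl; auto).
    destruct (IH _ V ltac:(rewrite Hs; lia) HT2) as [l [mn [x [Hf Hc]]]].
    exists l, mn, x. split; auto. eapply eq_trans; [apply eq_unfold; auto | exact Hc].
Qed.

Definition r0 (n : nat) := Fin 0 n.

Lemma TFV_fin : forall V A, TFV V A -> forall r, (forall n, ~ V n -> r n <> Inf) -> Vl A r <> Inf.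
Proof.
  induction 1; simpl; intros r Hr; auto.
  - destruct (Vl A r) eqn:E; simpl; try discriminate. intro; eapply IHTFV; eauto.
  - apply IHTFV. intros [|n]; simpl; auto.
Qed.

Lemma tf_form_fin : forall l mn x, Vl (tf_form l mn x) r0 <> Inf.
Proof.
  induction l as [|[m B] l IH]; intros; simpl.
  - rewrite Vl_bullets. simpl. unfold r0. rewrite bumpn_Fin. discriminate.
  - rewrite Vl_bullets. simpl. apply bumpn_ninf. auto.
Qed.

Lemma tf_fin : forall A, tail_finite A -> Vl A r0 <> Inf.
Proof.
  intros A [l [mn [x [_ Hc]]]]. rewrite (inv _ _ _ Hc). apply tf_form_fin.
Qed.

Theorem theorem8 : forall (dist : bool) (A : ty), wf A ->
  (TF A <-> tail_finite A) /\
  (tail_finite A <-> ~ eqty dist A top) /\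
  (~ eqty dist A top <-> top_variant A = false).
Proof.
  intros d A HA.
  assert (F6 : TF A -> tail_finite A).
  { intros H. exact (TF_tf (sp A) A _ (le_n _) H). }
  assert (Fc : tail_finite A -> ~ eqty d A top).
  { intros H Heq. apply (tf_fin A H). rewrite (inv _ _ _ Heq). reflexivity. }
  assert (Fd : ~ eqty d A top -> top_variant A = false).
  { intros H. destruct (top_variant A) eqn:E; auto. exfalso. apply H. apply tv_eq_top; auto. }
  assert (Fa : top_variant A = false -> TF A) by (apply tv_false_TF'; auto).
  split; [|split]; split; intros; auto.
Qed.
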